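(* Let $\bm{W}_0$ and $\widetilde{\bm{W}}$ be real $(d+2)\times(d+2)$ matrices (indexed $0,\ldots,d+1$) whose directed graphs are both acyclic. Suppose that for every $j\in\{0,\ldots,d+1\}$, every parent of $j$ in the directed graph of $\bm{W}_0$ is an ancestor of $j$ in the directed graph of $\widetilde{\bm{W}}$. Then for every $j\in\{0,\ldots,d+1\}$, no descendant of $j$ in the directed graph of $\bm{W}_0$ is an ancestor of $j$ in the directed graph of $\widetilde{\bm{W}}$.
   Context: For a matrix $\bm{W}$, its directed graph has vertex set $\{0,\ldots,d+1\}$ and an arrow $i\to j$ iff $W_{j,i}\neq 0$; $i$ is a parent of $j$ if $i\to j$; $i$ is an ancestor of $j$ (and $j$ a descendant of $i$) if there is a directed path from $i$ to $j$ through distinct nodes with at least one step. *)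

(* Defs.v *)
From mathcomp Require Import all_boot all_order all_algebra.
From mathcomp Require Import reals.
Set Implicit Arguments. Unset Strict Implicit. Unset Printing Implicit Defensive.
Import GRing.Theory Num.Theory.
Local Open Scope ring_scope.

Definition arrow (R : ringType) (n : nat) (W : 'M[R]_n) : rel 'I_n :=
  fun i j => W j i != 0.

Definition parent (R : ringType) (n : nat) (W : 'M[R]_n) (i j : 'I_n) : Prop :=
  arrow W i j.

Definition ancestor (R : ringType) (n : nat) (W : 'M[R]_n) (i j : 'I_n) : Prop :=
  exists p : seq 'I_n,
    [/\ p != [::], path (arrow W) i p, last i p = j & uniq (i :: p)].

Definition descendant (R : ringType) (n : nat) (W : 'M[R]_n) (j i : 'I_n) : Prop :=
  ancestor W i j.

(* Acyclic: no directed cycle (including self-loops). A directed cycle is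
   a path of distinct nodes i :: p followed by an arrow back to i. *)
Definition acyclic (R : ringType) (n : nat) (W : 'M[R]_n) : Prop :=
  ~ exists (i : 'I_n) (p : seq 'I_n),
      [/\ path (arrow W) i p, uniq (i :: p) & arrow W (last i p) i].

(* Main.v *)
Require Import Defs.
From mathcomp Require Import all_boot all_order all_algebra.
From mathcomp Require Import reals.
Set Implicit Arguments. Unset Strict Implicit.

Lemma acyc_noclosed (R : ringType) (n : nat) (W : 'M[R]_n) :
  acyclic W -> forall x y, arrow W x y -> connect (arrow W) y x -> False.
Proof.
move=> Hac x y Hxy /connectP [p Hp Hl].
case: (shortenP Hp) Hl => q Hq Uq _ Hl.
apply: Hac; exists y, q; split => //; by rewrite -Hl.
Qed.

Lemma anc_step (R : ringType) (n : nat) (W : 'M[R]_n) a b :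
  ancestor W a b -> exists c, arrow W a c /\ connect (arrow W) c b.
Proof.
case=> [[|c p] [//= _ /andP [Hac Hp] Hl _]].
exists c; split => //; apply/connectP; exists p => //.
Qed.

Lemma path_conn (R : ringType) (n : nat) (W0 W : 'M[R]_n) :
  (forall x y, arrow W0 x y -> connect (arrow W) x y) ->
  forall p a, path (arrow W0) a p -> connect (arrow W) a (last a p).
Proof.
move=> H; elim=> [|c p IH] a /=; first by rewrite connect0.
case/andP=> Hac Hp; apply: connect_trans (H _ _ Hac) (IH _ Hp).
Qed.

Theorem lemma5 (R : realType) (d : nat) (W0 Wt : 'M[R]_(d.+2)) :
  acyclic W0 -> acyclic Wt ->
  (forall j i : 'I_(d.+2), parent W0 i j -> ancestor Wt i j) ->
  forall j : 'I_(d.+2),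
    ~ exists k : 'I_(d.+2), descendant W0 k j /\ ancestor Wt k j.
Proof.
move=> _ Ht H j [k [[p [_ Hp Hl _]] Hkj]].
have Hc : forall x y, arrow W0 x y -> connect (arrow Wt) x y.
  move=> x y Hxy; case: (anc_step (H y x Hxy)) => c [Hxc Hcy].
  exact: connect_trans (connect1 Hxc) Hcy.
have Hjk := path_conn Hc Hp; rewrite Hl in Hjk.
case: (anc_step Hkj) => c [Hkc Hcj].
exact: (acyc_noclosed Ht Hkc (connect_trans Hcj Hjk)).
Qed.
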